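(* Let $n\ge 2$, $k\ge 0$ and $\nu_1,\ldots,\nu_n>0$. The set of polynomials \[ \psi_{j_1,\ldots,j_{n-1}} = CK_{n}\Big( \big(K_+^{[n-1]}\big)^{j_{n-1}} CK_{n-1}\Big( \cdots \big(K_+^{[3]}\big)^{j_3} CK_{3}\Big( \big(K_+^{[2]}\big)^{j_2} CK_{2}\big( x_1^{j_1}\big)\Big)\cdots\Big)\Big), \] where $(j_1,\ldots,j_{n-1})$ ranges over all tuples of nonnegative integers with $\sum_{\ell=1}^{n-1} j_\ell = k$, is a basis of $\mathcal{H}_k(\mathbb{R}^n)$.
   Context: For $m\ge 1$, $\mathcal{P}_k(\mathbb{R}^m)$ denotes the space of real homogeneous polynomials of degree $k$ in $x_1,\ldots,x_m$. For $m\le n$, $K_+^{[m]}=\sum_{j=1}^m (x_j^2\partial_{x_j}+2\nu_j x_j)$ and $K_-^{[m]}=\sum_{j=1}^m\partial_{x_j}$, acting on polynomials in $x_1,\ldots,x_m$. $\mathcal{H}_k(\mathbb{R}^n)=\mathcal{P}_k(\mathbb{R}^n)\cap\ker K_-^{[n]}$. For $2\le m\le n$, $CK_m$ is the map sending a polynomial $p(x_1,\ldots,x_{m-1})$ to $p(x_1-x_m,\ldots,x_{m-1}-x_m)$. *)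

(* Defs.v *)
From HB Require Import structures.
From mathcomp Require Import all_boot all_order all_algebra.
From mathcomp Require Import mpoly.
Set Implicit Arguments. Unset Strict Implicit. Unset Printing Implicit Defensive.
Import Order.TTheory GRing.Theory Num.Theory.
Local Open Scope ring_scope.

Section Defs.
Variables (R : realFieldType) (n : nat).

(* The variable x_{c+1} (0-indexed c), or 0 if c >= n (never used so). *)
Definition Xvar (c : nat) : {mpoly R[n]} := oapp (fun i : 'I_n => 'X_i) 0 (insub c).

(* K_+^{[m]} = sum_{j=1}^m (x_j^2 d_{x_j} + 2 nu_j x_j), acting on polynomials
   in x_1..x_m, viewed inside R[x_1..x_n]; variable x_j has index j-1. *)
Definition Kplus (nu : 'I_n -> R) (m : nat) (p : {mpoly R[n]}) : {mpoly R[n]} :=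
  \sum_(i : 'I_n | (i < m)%N) ('X_i ^+ 2 * p^`M(i) + (2 * nu i) *: ('X_i * p)).

Definition Kminus (m : nat) (p : {mpoly R[n]}) : {mpoly R[n]} :=
  \sum_(i : 'I_n | (i < m)%N) p^`M(i).

Definition CK (m : nat) (p : {mpoly R[n]}) : {mpoly R[n]} :=
  p \mPo [tuple (if (i < m.-1)%N then 'X_i - Xvar m.-1 else 'X_i) | i < n].

Definition Hk (k : nat) : pred {mpoly R[n]} :=
  fun p => (p \is k.-homog) && (Kminus n p == 0).

(* inner jf m' is the argument of CK_{m'+2} in the nested expression:
   inner 0 = x_1^{j_1},
   inner (m'+1) = (K_+^{[m'+2]})^{j_{m'+2}} (CK_{m'+2} (inner m')). *)
Fixpoint psi_inner (nu : 'I_n -> R) (jf : nat -> nat) (m' : nat) : {mpoly R[n]} :=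
  match m' with
  | 0 => Xvar 0 ^+ jf 1%N
  | m''.+1 => iter (jf m''.+2) (Kplus nu m''.+2) (CK m''.+2 (psi_inner nu jf m''))
  end.

(* psi_{j_1,...,j_{n-1}} = CK_n ( ... ) ; jf l = j_l for 1 <= l <= n-1. *)
Definition psi (nu : 'I_n -> R) (jf : nat -> nat) : {mpoly R[n]} :=
  CK n (psi_inner nu jf (n - 2)).

(* j : {ffun 'I_(n-1) -> 'I_(k+1)} encodes (j_1,...,j_{n-1}) with j_l = j (l-1). *)
Definition jfun (k : nat) (j : {ffun 'I_n.-1 -> 'I_k.+1}) (l : nat) : nat :=
  oapp (fun i : 'I_n.-1 => nat_of_ord (j i)) 0%N (insub l.-1).

Definition Jset (k : nat) : {set {ffun 'I_n.-1 -> 'I_k.+1}} :=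
  [set j : {ffun 'I_n.-1 -> 'I_k.+1} | (\sum_(i < n.-1) nat_of_ord (j i) == k)%N].

End Defs.

(* Main.v *)
Require Import Defs.
From HB Require Import structures.
From mathcomp Require Import all_boot all_order all_algebra.
From mathcomp Require Import mpoly.
From mathcomp Require Import ring zify.
From Stdlib Require Import IndefiniteDescription.
Import Order.TTheory GRing.Theory Num.Theory.
Local Open Scope ring_scope.

Module Aux.
Set Implicit Arguments. Unset Strict Implicit. Unset Printing Implicit Defensive.

Section Basics.
Variables (R : realFieldType) (n : nat).
Local Notation P := {mpoly R[n]}.

Lemma mderivXU (i j : 'I_n) : ('X_j : P)^`M(i) = (j == i)%:R.
Proof.
rewrite mderivX mnm1E; case: eqP => [->|_]; last by rewrite scale0r.
have -> : (U_(i) - U_(i) = 0)%MM by apply/mnmP=> k; rewrite mnmBE mnm0E subnn.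
by rewrite mpolyX0 scale1r.
Qed.

Lemma morph0 (f : P -> P) : {morph f : x y / x + y} -> f 0 = 0.
Proof. by move=> h; apply/(addrI (f 0)); rewrite -h !addr0. Qed.

Lemma deriv_ext (phi D1 D2 : P -> P) :
  phi 1 = 1 -> {morph phi : x y / x * y} ->
  {morph D1 : x y / x + y} -> {morph D2 : x y / x + y} ->
  (forall c p, D1 (c *: p) = c *: D1 p) -> (forall c p, D2 (c *: p) = c *: D2 p) ->
  (forall p q, D1 (p * q) = D1 p * phi q + phi p * D1 q) ->
  (forall p q, D2 (p * q) = D2 p * phi q + phi p * D2 q) ->
  (forall i, D1 'X_i = D2 'X_i) -> D1 =1 D2.
Proof.
move=> phi1 phiM D1D D2D D1Z D2Z D1M D2M DX.
have D11 : forall D : P -> P, {morph D : x y / x + y} ->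
   (forall p q, D (p * q) = D p * phi q + phi p * D q) -> D 1 = 0.
  move=> D DD DM; apply/(addrI (D 1)); rewrite addr0.
  by rewrite -[in RHS](mulr1 1) DM phi1 mulr1 mul1r.
have Pm : forall x y, D1 x = D2 x -> D1 y = D2 y -> D1 (x * y) = D2 (x * y).
  by move=> x y hx hy; rewrite D1M D2M hx hy.
move=> p; rewrite (mpolyE p).
apply: (big_ind (fun x => D1 x = D2 x)).
- by rewrite (morph0 D1D) (morph0 D2D).
- by move=> x y hx hy; rewrite D1D D2D hx hy.
move=> m _; rewrite D1Z D2Z; congr (_ *: _).
rewrite mpolyXE_id; apply: (big_ind (fun x => D1 x = D2 x)).
- by rewrite (D11 _ D1D D1M) (D11 _ D2D D2M).
- exact: Pm.
move=> i _; elim: (m i) => [|k IH]; first by rewrite expr0 (D11 _ D1D D1M) (D11 _ D2D D2M).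
by rewrite exprS; apply: Pm.
Qed.

Lemma comp_mpolyA (p : P) (t1 t2 : n.-tuple P) :
  (p \mPo t1) \mPo t2 = p \mPo [tuple (tnth t1 i \mPo t2) | i < n].
Proof.
rewrite [p \mPo t1]comp_mpolyEX [p \mPo _]comp_mpolyEX raddf_sum /=.
apply: eq_bigr => m _; rewrite comp_mpolyZ; congr (_ *: _).
rewrite !comp_mpolyX rmorph_prod; apply: eq_bigr => i _.
by rewrite rmorphXn tnth_mktuple.
Qed.

End Basics.


Section Ops.
Variables (R : realFieldType) (n : nat).
Local Notation P := {mpoly R[n]}.

Lemma Kminus_is_linear m : linear (@Kminus R n m).
Proof.
move=> a p q; rewrite /Kminus scaler_sumr -big_split; apply: eq_bigr => i _.
by rewrite mderivD mderivZ.
Qed.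
HB.instance Definition _ m := GRing.isLinear.Build R P P *:%R (@Kminus R n m)
  (Kminus_is_linear m).

Lemma KminusM m (p q : P) : Kminus m (p * q) = Kminus m p * q + p * Kminus m q.
Proof.
rewrite /Kminus mulr_suml mulr_sumr -big_split; apply: eq_bigr => i _.
by rewrite mderivM.
Qed.

Lemma sum_delta (P0 : pred 'I_n) (j : 'I_n) :
  \sum_(i | P0 i) ((j == i)%:R : P) = (P0 j)%:R.
Proof.
rewrite big_mkcond (bigD1 j) //= eqxx big1 ?addr0; first by case: (P0 j).
by move=> i /negbTE; rewrite eq_sym => ->; case: (P0 i).
Qed.

Variable e : 'I_n.

Definition t2 : n.-tuple P := [tuple (if i == e then 0 else 'X_i) | i < n].
Definition r0 (p : P) : P := p \mPo t2.

Lemma XvarE : @Xvar R n e = 'X_e.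
Proof. by rewrite /Xvar valK. Qed.

Lemma CKE (p : P) : CK e.+1 p = p \mPo [tuple (if (i < e)%N then 'X_i - 'X_e else 'X_i : P) | i < n].
Proof. by rewrite /CK /= XvarE. Qed.

Lemma CK_X (j : 'I_n) : CK e.+1 ('X_j : P) = if (j < e)%N then 'X_j - 'X_e else 'X_j.
Proof. by rewrite CKE comp_mpolyXU -tnth_nth tnth_mktuple. Qed.

Lemma r0_X (j : 'I_n) : r0 ('X_j : P) = if j == e then 0 else 'X_j.
Proof. by rewrite /r0 comp_mpolyXU -tnth_nth tnth_mktuple. Qed.

Lemma CK_C (c : R) : CK e.+1 (c%:MP : P) = c%:MP.
Proof. by rewrite CKE comp_mpolyC. Qed.
Lemma r0_C (c : R) : r0 (c%:MP : P) = c%:MP.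
Proof. by rewrite /r0 comp_mpolyC. Qed.

Lemma CK_nat k : CK e.+1 (k%:R : P) = k%:R.
Proof. by rewrite CKE rmorph_nat. Qed.
Lemma r0_nat k : r0 (k%:R : P) = k%:R.
Proof. by rewrite /r0 rmorph_nat. Qed.

Lemma chain_gt (i : 'I_n) (p : P) : (e < i)%N -> (CK e.+1 p)^`M(i) = CK e.+1 (p^`M(i)).
Proof.
move=> lt_ei; rewrite !CKE; move: p.
apply: (@deriv_ext R n (comp_mpoly _) (fun p => (p \mPo _)^`M(i)) (fun p => (p^`M(i)) \mPo _)).
- exact: comp_mpoly1.
- exact: rmorphM.
- by move=> x y /=; rewrite comp_mpolyD mderivD.
- by move=> x y /=; rewrite mderivD comp_mpolyD.
- by move=> c x /=; rewrite comp_mpolyZ mderivZ.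
- by move=> c x /=; rewrite mderivZ comp_mpolyZ.
- by move=> x y /=; rewrite rmorphM mderivM.
- by move=> x y /=; rewrite mderivM rmorphD !rmorphM.
move=> j /=; rewrite comp_mpolyXU -tnth_nth tnth_mktuple mderivXU rmorph_nat.
case: ifP => lt_je; last by rewrite mderivXU.
rewrite mderivB !mderivXU.
have -> : (e == i) = false by apply/negbTE; rewrite neq_ltn lt_ei.
have -> : (j == i) = false.
  by apply/negbTE; rewrite neq_ltn (ltn_trans lt_je lt_ei).
by rewrite subr0.
Qed.

Lemma chain_Km (p : P) : Kminus e.+1 (CK e.+1 p) = CK e.+1 (p^`M(e)).
Proof.
rewrite !CKE; set t := [tuple _ | i < n]; move: p.
apply: (@deriv_ext R n (comp_mpoly t) (fun p => Kminus e.+1 (p \mPo t)) (fun p => (p^`M(e)) \mPo t)).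
- exact: comp_mpoly1.
- exact: rmorphM.
- by move=> x y /=; rewrite comp_mpolyD raddfD.
- by move=> x y /=; rewrite mderivD comp_mpolyD.
- by move=> c x /=; rewrite comp_mpolyZ linearZ.
- by move=> c x /=; rewrite mderivZ comp_mpolyZ.
- by move=> x y /=; rewrite rmorphM KminusM.
- by move=> x y /=; rewrite mderivM rmorphD !rmorphM.
move=> j /=; rewrite comp_mpolyXU -tnth_nth tnth_mktuple mderivXU rmorph_nat.
rewrite /Kminus; case: ifP => lt_je.
  under eq_bigr do rewrite mderivB !mderivXU.
  rewrite sumrB !sum_delta ltnSn ltnS (ltnW lt_je).
  have -> : (j == e) = false by apply/negbTE; rewrite neq_ltn lt_je.
  by rewrite subrr.
under eq_bigr do rewrite mderivXU.
rewrite sum_delta ltnS; congr (_%:R); congr nat_of_bool; apply/idP/idP => [le|/eqP ->//]; apply/eqP/val_inj/eqP.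
by rewrite eqn_leq le leqNgt lt_je.
Qed.

Lemma chain_r0 (i : 'I_n) (p : P) : i != e -> (r0 p)^`M(i) = r0 (p^`M(i)).
Proof.
move=> ne_ie; rewrite /r0; move: p.
apply: (@deriv_ext R n (comp_mpoly t2) (fun p => (p \mPo t2)^`M(i)) (fun p => (p^`M(i)) \mPo t2)).
- exact: comp_mpoly1.
- exact: rmorphM.
- by move=> x y /=; rewrite comp_mpolyD mderivD.
- by move=> x y /=; rewrite mderivD comp_mpolyD.
- by move=> c x /=; rewrite comp_mpolyZ mderivZ.
- by move=> c x /=; rewrite mderivZ comp_mpolyZ.
- by move=> x y /=; rewrite rmorphM mderivM.
- by move=> x y /=; rewrite mderivM rmorphD !rmorphM.
move=> j /=; rewrite comp_mpolyXU -tnth_nth tnth_mktuple mderivXU rmorph_nat.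
case: eqP => [->|_]; last by rewrite mderivXU.
by rewrite mderiv0 eq_sym (negbTE ne_ie).
Qed.

Lemma chain_r0e (p : P) : (r0 p)^`M(e) = 0.
Proof.
rewrite /r0; move: p.
apply: (@deriv_ext R n (comp_mpoly t2) (fun p => (p \mPo t2)^`M(e)) (fun p => 0)).
- exact: comp_mpoly1.
- exact: rmorphM.
- by move=> x y /=; rewrite comp_mpolyD mderivD.
- by move=> x y /=; rewrite addr0.
- by move=> c x /=; rewrite comp_mpolyZ mderivZ.
- by move=> c x /=; rewrite scaler0.
- by move=> x y /=; rewrite rmorphM mderivM.
- by move=> x y /=; rewrite mul0r mulr0 addr0.
move=> j /=; rewrite comp_mpolyXU -tnth_nth tnth_mktuple.
by case: eqP => [_|/eqP]; rewrite ?mderiv0 // mderivXU => /negbTE ->.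
Qed.

Lemma r0_CK (p : P) : r0 (CK e.+1 p) = r0 p.
Proof.
rewrite CKE /r0 comp_mpolyA; congr comp_mpoly.
apply: eq_from_tnth => i; rewrite !tnth_mktuple.
case: ifP => lt_ie.
  rewrite comp_mpolyB !comp_mpolyXU -!tnth_nth !tnth_mktuple eqxx subr0.
  by have -> : (i == e) = false by apply/negbTE; rewrite neq_ltn lt_ie.
by rewrite comp_mpolyXU -tnth_nth tnth_mktuple.
Qed.

Lemma r0_r0 (p : P) : r0 (r0 p) = r0 p.
Proof.
rewrite /r0 comp_mpolyA; congr comp_mpoly.
apply: eq_from_tnth => i; rewrite !tnth_mktuple.
case: eqP => [_|/eqP ne]; first by rewrite comp_mpoly0.
by rewrite comp_mpolyXU -tnth_nth tnth_mktuple (negbTE ne).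
Qed.

Lemma r0_Xm (mm : 'X_{1..n}) : 'X_[mm] \mPo t2 = if mm e == 0%N then 'X_[mm] else 0.
Proof.
rewrite comp_mpolyX; case: eqP => [me0|/eqP mne0].
  rewrite [RHS]mpolyXE_id; apply: eq_bigr => i _; rewrite tnth_mktuple.
  by case: eqP => [->|//]; rewrite me0 !expr0.
rewrite (bigD1 e) //= tnth_mktuple eqxx expr0n.
by rewrite (negbTE mne0) mul0r.
Qed.

Lemma mcoeff_r0 (p : P) mono : (r0 p)@_mono = if mono e == 0%N then p@_mono else 0.
Proof.
rewrite /r0 comp_mpolyEX raddf_sum /=.
case: eqP => [me0|/eqP mne0].
  rewrite {3}[p]mpolyE raddf_sum /=; apply: eq_bigr => mm _.
  rewrite !mcoeffZ r0_Xm; case: eqP => // /eqP mmne0.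
  rewrite mcoeff0 mcoeffX; case: eqP => [eq_mm|]; last by rewrite mulr0.
  by move: mmne0; rewrite eq_mm me0.
apply: big1 => mm _; rewrite mcoeffZ r0_Xm; case: eqP => [mme0|]; last by rewrite mcoeff0 mulr0.
rewrite mcoeffX; case: eqP => [eq_mm|]; last by rewrite mulr0.
by move: mne0; rewrite -eq_mm mme0.
Qed.

Lemma mnm_subUK (mono : 'X_{1..n}) : mono e != 0%N -> (mono - U_(e) + U_(e))%MM = mono.
Proof.
move=> ne0; apply/mnmP => i; rewrite mnmDE mnmBE mnm1E.
case: eqP => [<-|_]; last by rewrite subn0 addn0.
by rewrite subnK // lt0n.
Qed.

Lemma r0_id (p : P) : p^`M(e) = 0 -> r0 p = p.
Proof.
move=> de0; apply/mpolyP => mono; rewrite mcoeff_r0; case: eqP => // /eqP ne0.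
have := congr1 (mcoeff (mono - U_(e))%MM) de0.
rewrite mcoeff_mderiv mnm_subUK // mcoeff0 => /eqP.
by rewrite mulrn_eq0 /= => /eqP.
Qed.

Lemma r0_Km0 (g : P) : r0 g = 0 -> Kminus e.+1 g = 0 -> g = 0.
Proof.
move=> rg Kg.
suff H : forall r (mono : 'X_{1..n}), mono e = r -> g@_mono = 0.
  by apply/mpolyP => mono; rewrite mcoeff0 (H _ mono erefl).
elim=> [|r IH] mono me.
  by have := mcoeff_r0 g mono; rewrite me eqxx rg mcoeff0 => <-.
have := congr1 (mcoeff (mono - U_(e))%MM) Kg.
rewrite /Kminus raddf_sum /= mcoeff0 (bigD1 e) //= big1 ?addr0.
  rewrite mcoeff_mderiv mnm_subUK ?me // => /eqP.
  by rewrite mulrn_eq0 /= => /eqP.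
move=> i /andP [_ ne_ie]; rewrite mcoeff_mderiv IH ?mul0rn //.
by rewrite mnmDE mnmBE !mnm1E eqxx me (negbTE ne_ie) addn0 subn1.
Qed.

Lemma ker_CK (q : P) : Kminus e.+1 q = 0 -> q = CK e.+1 (r0 q).
Proof.
move=> Kq; apply/eqP; rewrite -subr_eq0; apply/eqP; apply: r0_Km0.
  by rewrite /r0 raddfB /= -/(r0 q) -/(r0 (CK _ _)) r0_CK r0_r0 subrr.
by rewrite raddfB /= Kq chain_Km chain_r0e /= CKE comp_mpoly0 subrr.
Qed.

End Ops.


Section Homog.
Variables (R : realFieldType) (n : nat).
Local Notation P := {mpoly R[n]}.

Lemma deriv_coef_homog (p : P) d (i : 'I_n) mono :
  p \is d.-homog -> (p^`M(i))@_mono != 0 -> (mdeg mono).+1 = d.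
Proof.
move=> /dhomogP hp; rewrite mcoeff_mderiv.
have [->|nz] := eqVneq (p@_(mono + U_(i))%MM) 0; first by rewrite mul0rn eqxx.
move=> _; rewrite -(hp (mono + U_(i))%MM); last by rewrite mcoeff_msupp.
rewrite -[RHS]/(mdeg (mono + U_(i))%MM). by rewrite mdegD mdeg1 addn1.
Qed.

Lemma dhomog_deriv (p : P) d i : p \is d.-homog -> p^`M(i) \is d.-1.-homog.
Proof.
move=> hp; apply/dhomogP => mono; rewrite mcoeff_msupp => nz.
by rewrite -(deriv_coef_homog hp nz).
Qed.

Lemma deriv_homog0 (p : P) i : p \is 0.-homog -> p^`M(i) = 0.
Proof.
move=> hp; apply/mpolyP => mono; rewrite mcoeff0.
by apply/eqP; apply: contraTT isT => /(deriv_coef_homog hp).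
Qed.

Lemma dhomogXi (i : 'I_n) : ('X_i : P) \is 1.-homog.
Proof. by rewrite dhomogX; apply/eqP; exact: mdeg1. Qed.

Lemma dhomog_comp (t : n.-tuple P) (p : P) d :
  (forall i, tnth t i \is 1.-homog) -> p \is d.-homog -> p \mPo t \is d.-homog.
Proof.
move=> ht /dhomogP hp; rewrite comp_mpolyEX big_seq; apply: rpred_sum => mm mmp.
have hmm : mdeg mm = d := hp mm mmp.
apply: rpredZ; rewrite comp_mpolyX -hmm mdegE.
elim: (index_enum _) => [|i s IH]; first by rewrite !big_nil dhomog1.
rewrite !big_cons; apply: dhomogM => //.
by rewrite -[X in X.-homog]mul1n; apply: dhomogMn.
Qed.

Lemma mcoeffXiM (i : 'I_n) (q : P) mono :
  ('X_i * q)@_mono = if (0 < mono i)%N then q@_(mono - U_(i))%MM else 0.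
Proof.
rewrite mulrC; case: ifP => pos.
  have {1}-> : mono = (U_(i) + (mono - U_(i)))%MM.
    apply/mnmP => j; rewrite mnmDE mnmBE mnm1E.
    by case: eqP => [<-|]; rewrite ?subn0 // add1n subn1 prednK.
  by rewrite mcoeffMX.
apply/eqP; rewrite mcoeff_eq0; apply/negP; rewrite (perm_mem (msuppMX _ _)).
case/mapP => m' _ eqm; move: pos; rewrite eqm mnmDE mnm1E eqxx.
by rewrite add1n.
Qed.

Definition Eul (m : nat) (p : P) : P := \sum_(i : 'I_n | (i < m)%N) 'X_i * p^`M(i).

Lemma mcoeff_Eul_full (p : P) mono :
  (\sum_(i : 'I_n) 'X_i * p^`M(i))@_mono = (mdeg mono)%:R * p@_mono.
Proof.
rewrite raddf_sum /= mdegE natr_sum mulr_suml; apply: eq_bigr => i _.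
rewrite mcoeffXiM; case: ifP => pos; last first.
  by move: pos; rewrite lt0n => /negbFE /eqP ->; rewrite mul0r.
rewrite mcoeff_mderiv mnm_subUK -?lt0n // mulr_natl; congr (_ *+ _).
by rewrite mnmBE mnm1E eqxx subn1 prednK.
Qed.

Definition Vm (m : nat) (p : P) := forall i : 'I_n, (m <= i)%N -> p^`M(i) = 0.

Lemma Eul_homog m (p : P) d : Vm m p -> p \is d.-homog -> Eul m p = d%:R *: p.
Proof.
move=> hv /dhomogP hp.
have -> : Eul m p = \sum_(i : 'I_n) 'X_i * p^`M(i).
  rewrite /Eul big_mkcond; apply: eq_bigr => i _.
  by case: ltnP => // le; rewrite hv // mulr0.
apply/mpolyP => mono; rewrite mcoeff_Eul_full mcoeffZ.
have [->|nz] := eqVneq (p@_mono) 0; first by rewrite !mulr0.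
by rewrite hp // mcoeff_msupp.
Qed.

End Homog.


Section Kp.
Variables (R : realFieldType) (n : nat) (nu : 'I_n -> R).
Local Notation P := {mpoly R[n]}.

Lemma dM i (p q : P) : (p * q)^`M(i) = p^`M(i) * q + p * q^`M(i).
Proof. exact: mderivM. Qed.
Lemma KmM m (p q : P) : Kminus m (p * q) = Kminus m p * q + p * Kminus m q.
Proof. exact: KminusM. Qed.

Lemma Kplus_is_linear m : linear (Kplus nu m).
Proof.
move=> a p q; rewrite /Kplus scaler_sumr -big_split; apply: eq_bigr => i _.
rewrite mderivD mderivZ -!mul_mpolyC. simpl. ring.
Qed.
HB.instance Definition _ m := GRing.isLinear.Build R P P *:%R (Kplus nu m)
  (Kplus_is_linear m).

Lemma KminusD m (p q : P) : Kminus m (p + q) = Kminus m p + Kminus m q.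
Proof. by have := Kminus_is_linear m 1 p q; rewrite !scale1r. Qed.
Lemma KminusZ m c (p : P) : Kminus m (c *: p) = c *: Kminus m p.
Proof. by have := Kminus_is_linear m c p 0; rewrite !addr0 (morph0 (KminusD m)) addr0. Qed.
Lemma KplusD m (p q : P) : Kplus nu m (p + q) = Kplus nu m p + Kplus nu m q.
Proof. by have := Kplus_is_linear m 1 p q; rewrite !scale1r. Qed.
Lemma KplusZ m c (p : P) : Kplus nu m (c *: p) = c *: Kplus nu m p.
Proof. by have := Kplus_is_linear m c p 0; rewrite !addr0 (morph0 (KplusD m)) addr0. Qed.

Lemma Km_X m (l : 'I_n) : (l < m)%N -> Kminus m ('X_l : P) = 1.
Proof. by move=> lm; rewrite /Kminus; under eq_bigr do rewrite mderivXU; rewrite sum_delta lm. Qed.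

Lemma Km_comm m l (p : P) : Kminus m (p^`M(l)) = (Kminus m p)^`M(l).
Proof. by rewrite /Kminus raddf_sum; apply: eq_bigr => i _; rewrite mderiv_comm. Qed.

Definition sig m : R := \sum_(i : 'I_n | (i < m)%N) nu i.

Lemma commKK m (p : P) :
  Kminus m (Kplus nu m p) = Kplus nu m (Kminus m p) + 2%:R *: Eul m p + (2%:R * sig m) *: p.
Proof.
rewrite /Kplus raddf_sum /= /Eul /sig scaler_sumr mulr_sumr scaler_suml.
rewrite -!big_split /=; apply: eq_bigr => l lm. simpl.
rewrite KminusD KminusZ (KminusM m ('X_l ^+ 2)) (KminusM m 'X_l p) Km_X // Km_comm expr2 (KminusM m 'X_l 'X_l) Km_X //.
rewrite -!mul_mpolyC. ring.
Qed.


Lemma Vm_Kplus m (p : P) : Vm m p -> Vm m (Kplus nu m p).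
Proof.
move=> hv i mi; rewrite /Kplus raddf_sum /=; apply: big1 => l lm.
have ne : (l == i) = false by apply/negbTE; rewrite neq_ltn (leq_trans lm mi).
rewrite mderivD mderivZ (dM i) (dM i) expr2 (dM i) !mderivXU ne -mderiv_comm (hv i mi).
rewrite mderiv0 /= !mulr0n !mul0r !mulr0 !addr0 mul0r add0r scaler0. done.
Qed.

Lemma Vm_Kminus m' m (p : P) : Vm m' p -> Vm m' (Kminus m p).
Proof.
move=> hv i mi; rewrite /Kminus raddf_sum /=; apply: big1 => l _.
by rewrite mderiv_comm hv // mderiv0.
Qed.

Lemma homog_Kplus m (p : P) d : p \is d.-homog -> Kplus nu m p \is d.+1.-homog.
Proof.
move=> hp; rewrite /Kplus; apply: rpred_sum => l _; apply: rpredD; last first.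
  by apply: rpredZ; rewrite -add1n; apply: dhomogM => //; exact: dhomogXi.
case: d hp => [|d] hp; first by rewrite deriv_homog0 // mulr0 rpred0.
have -> : d.+2 = (1 * 2 + d.+1.-1)%N by rewrite mul1n.
by apply: dhomogM; [apply: dhomogMn; exact: dhomogXi | exact: dhomog_deriv].
Qed.

Lemma homog_Kminus m (p : P) d : p \is d.-homog -> Kminus m p \is d.-1.-homog.
Proof. by move=> hp; apply: rpred_sum => l _; exact: dhomog_deriv. Qed.

Lemma homog_iter m j (p : P) d : p \is d.-homog -> iter j (Kplus nu m) p \is (d + j)%N.-homog.
Proof.
elim: j => [|j IH] hp; first by rewrite addn0.
by rewrite iterS addnS; apply: homog_Kplus; exact: IH.
Qed.

Lemma Vm_iter m j (p : P) : Vm m p -> Vm m (iter j (Kplus nu m) p).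
Proof. by elim: j => [//|j IH] hp; rewrite iterS; apply: Vm_Kplus; exact: IH. Qed.

Lemma iterD m j (p q : P) : iter j (Kplus nu m) (p + q) = iter j (Kplus nu m) p + iter j (Kplus nu m) q.
Proof. by elim: j => [//|j IH]; rewrite !iterS IH KplusD. Qed.

Lemma iterZ m j c (p : P) : iter j (Kplus nu m) (c *: p) = c *: iter j (Kplus nu m) p.
Proof. by elim: j => [//|j IH]; rewrite !iterS IH KplusZ. Qed.

Lemma iter0 m j : iter j (Kplus nu m) (0 : P) = 0.
Proof. by elim: j => [//|j IH]; rewrite iterS IH (morph0 (KplusD m)). Qed.

Lemma iter_sum m j I (r : seq I) (Q : pred I) (F : I -> P) :
  iter j (Kplus nu m) (\sum_(i <- r | Q i) F i) = \sum_(i <- r | Q i) iter j (Kplus nu m) (F i).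
Proof. by apply: (big_morph _ (iterD m j) (iter0 m j)). Qed.

Definition cc m d j : R := (j.+1)%:R * (2%:R * d%:R + j%:R + 2%:R * sig m).

Lemma Km_iter m d (h : P) j :
  Kminus m h = 0 -> Vm m h -> h \is d.-homog ->
  Kminus m (iter j.+1 (Kplus nu m) h) = cc m d j *: iter j (Kplus nu m) h.
Proof.
move=> Kh Vh hh; elim: j => [|j IH].
  rewrite iterS /= commKK Kh (morph0 (KplusD m)) add0r (Eul_homog Vh hh).
  by rewrite !scalerA -scalerDl /cc addr0 mul1r.
rewrite iterS commKK IH KplusZ -iterS.
rewrite (Eul_homog (Vm_iter j.+1 Vh) (homog_iter m j.+1 hh)).
rewrite !scalerA -!scalerDl; congr (_ *: _).
rewrite /cc natrD -!natr1; ring.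
Qed.

End Kp.


Section Vlem.
Variables (R : realFieldType) (n : nat).
Local Notation P := {mpoly R[n]}.
Lemma Vm0 m : Vm m (0 : P). Proof. by move=> i _; rewrite mderiv0. Qed.
Lemma VmD m (p q : P) : Vm m p -> Vm m q -> Vm m (p + q).
Proof. by move=> hp hq i mi; rewrite mderivD hp // hq // addr0. Qed.
Lemma VmN m (p : P) : Vm m p -> Vm m (- p).
Proof. by move=> hp i mi; rewrite mderivN hp // oppr0. Qed.
Lemma VmB m (p q : P) : Vm m p -> Vm m q -> Vm m (p - q).
Proof. by move=> hp hq; apply: VmD => //; apply: VmN. Qed.
Lemma VmZ m c (p : P) : Vm m p -> Vm m (c *: p).
Proof. by move=> hp i mi; rewrite mderivZ hp // scaler0. Qed.
Lemma Vm_sum m I (r : seq I) (Q : pred I) (F : I -> P) :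
  (forall i, Q i -> Vm m (F i)) -> Vm m (\sum_(i <- r | Q i) F i).
Proof.
move=> hF; elim/big_rec: _ => [|i x Qi hx]; first exact: Vm0.
by apply: VmD => //; apply: hF.
Qed.
End Vlem.

Section KL.
Variables (R : realFieldType) (n : nat) (nu : 'I_n -> R).
Hypothesis nupos : forall i, 0 < nu i.
Local Notation P := {mpoly R[n]}.
Variable e : 'I_n.
Local Notation m := e.+1.
Local Notation Kp := (Kplus nu m).
Local Notation Km := (Kminus m).

Lemma sig_gt0 : 0 < sig nu m.
Proof.
rewrite /sig (bigD1 e) //=; apply: ltr_pwDl; first exact: nupos.
by apply: sumr_ge0 => i _; apply: ltW.
Qed.

Lemma cc_neq0 d j : cc nu m d j != 0.
Proof.
rewrite /cc mulf_eq0 negb_or pnatr_eq0 /=; apply: lt0r_neq0.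
apply: ltr_wpDl; first by apply: addr_ge0; [apply: mulr_ge0|]; exact: ler0n.
by apply: mulr_gt0 => //; exact: sig_gt0.
Qed.

Definition good (i : nat) (h : P) := Km h = 0 /\ Vm m h /\ h \is i.-homog.

Lemma KminusB (p q : P) : Km (p - q) = Km p - Km q.
Proof. by rewrite KminusD -scaleN1r KminusZ scaleN1r. Qed.

Lemma Km_sum I (r : seq I) (Q : pred I) (F : I -> P) :
  Km (\sum_(i <- r | Q i) F i) = \sum_(i <- r | Q i) Km (F i).
Proof. exact: (big_morph _ (KminusD m) (morph0 (KminusD m))). Qed.

Lemma KL_uniq k (h : nat -> P) :
  (forall i, (i <= k)%N -> good i (h i)) ->
  \sum_(j < k.+1) iter j Kp (h (k - j)%N) = 0 -> forall i, (i <= k)%N -> h i = 0.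
Proof.
elim: k h => [|k IH] h hh S.
  by move=> i; rewrite leqn0 => /eqP ->; move: S; rewrite big_ord1.
have hz : forall i, (i <= k)%N -> h i = 0.
  pose h' i := cc nu m i (k - i) *: h i.
  have hh' : forall i, (i <= k)%N -> good i (h' i).
    move=> i ik; have [K1 [V1 H1]] := hh i (leqW ik).
    by split; [rewrite KminusZ K1 scaler0 | split; [apply: VmZ | apply: rpredZ]].
  have S' : \sum_(j < k.+1) iter j Kp (h' (k - j)%N) = 0.
    have := congr1 Km S; rewrite Km_sum big_ord_recl /= subn0 (morph0 (KminusD m)).
    have [-> _] := hh k.+1 (leqnn _); rewrite add0r => HS; rewrite -[RHS]HS.
    apply: eq_bigr => j _; rewrite /bump /= add1n subSS.
    have [K1 [V1 H1]] := hh (k - j)%N (leqW (leq_subr _ _)).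
    by rewrite (Km_iter _ _ K1 V1 H1) /h' iterZ subKn // -ltnS.
  move=> i ik; have /eqP := IH h' hh' S' i ik.
  by rewrite mscalerI (negbTE (cc_neq0 _ _)) /= => /eqP.
move=> i; rewrite leq_eqVlt ltnS => /orP [/eqP ->|]; last exact: hz.
move: S; rewrite big_ord_recl /= subn0 big1 ?addr0 //.
move=> j _; rewrite /bump /= add1n subSS hz ?leq_subr //.
by rewrite (iter0 nu) (morph0 (KplusD nu _)).
Qed.

Lemma Km_homog0 (q : P) : q \is 0.-homog -> Km q = 0.
Proof. by move=> hq; apply: big1 => i _; apply: deriv_homog0. Qed.

Lemma KL_exist k (q : P) : Vm m q -> q \is k.-homog ->
  exists h : nat -> P, (forall i, (i <= k)%N -> good i (h i)) /\
    q = \sum_(j < k.+1) iter j Kp (h (k - j)%N).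
Proof.
elim: k q => [|k IH] q Vq Hq.
  exists (fun _ => q); split; last by rewrite big_ord1.
  by move=> i; rewrite leqn0 => /eqP ->; split; [exact: Km_homog0|].
have [g [hg Eg]] := IH (Km q) (Vm_Kminus _ Vq) (homog_Kminus _ Hq).
pose h0 i := (cc nu m i (k - i))^-1 *: g i.
have hh0 : forall i, (i <= k)%N -> good i (h0 i).
  move=> i ik; have [K1 [V1 H1]] := hg i ik.
  by split; [rewrite KminusZ K1 scaler0 | split; [apply: VmZ | apply: rpredZ]].
pose r := q - \sum_(j < k.+1) iter j.+1 Kp (h0 (k - j)%N).
exists (fun i => if i == k.+1 then r else h0 i); split.
  move=> i; rewrite leq_eqVlt ltnS => /orP [/eqP ->|ik]; last first.
    by rewrite (ltn_eqF (ik : (i < k.+1)%N)); apply: hh0.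
  rewrite eqxx; split; [|split].
  - rewrite KminusB Km_sum Eg.
    suff E : forall j : 'I_k.+1, Km (iter j.+1 Kp (h0 (k - j)%N)) = iter j Kp (g (k - j)%N).
      by rewrite (eq_bigr _ (fun j _ => E j)) subrr.
    move=> j.
    have ik : (k - j <= k)%N := leq_subr _ _.
    have [K1 [V1 H1]] := hh0 _ ik.
    have jk : (j <= k)%N := ltn_ord j.
    rewrite (Km_iter _ _ K1 V1 H1) /h0 (iterZ nu) scalerA (subKn jk).
    by rewrite mulfV ?cc_neq0 // scale1r.
  - apply: VmB => //; apply: Vm_sum => j _; apply: Vm_iter.
    by have [_ [V1 _]] := hh0 _ (leq_subr j k).
  - apply: rpredB => //; apply: rpred_sum => j _.
    have [_ [_ H1]] := hh0 _ (leq_subr j k).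
    by have := homog_iter nu m j.+1 H1; rewrite addnS subnK // -ltnS.
rewrite big_ord_recl /= subn0 eqxx /r.
rewrite [X in _ = _ + X](eq_bigr (fun j : 'I_k.+1 => iter j.+1 Kp (h0 (k - j)%N))).
  by rewrite subrK.
move=> j _; rewrite /bump /= add1n subSS.
by have -> : ((k - j)%N == k.+1) = false by apply/negbTE/eqP; lia.
Qed.

End KL.


Section Comb.
Variables (N K : nat).
Local Notation J1 := {ffun 'I_N.+1 -> 'I_K.+1}.
Local Notation J2 := {ffun 'I_N.+2 -> 'I_K.+1}.

Definition Jm (M : nat) (k : nat) : {set {ffun 'I_M.+1 -> 'I_K.+1}} :=
  [set j : {ffun 'I_M.+1 -> 'I_K.+1} | (\sum_(i < M.+1) (j i : nat) == k)%N].

Definition initj (j : J2) : J1 := [ffun i => j (widen_ord (leqnSn _) i)].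
Definition lastj (j : J2) : 'I_K.+1 := j ord_max.
Definition extj (j' : J1) (a : 'I_K.+1) : J2 :=
  [ffun i : 'I_N.+2 => if (insub (val i) : option 'I_N.+1) is Some i' then j' i' else a].

Lemma init_ext j' a : initj (extj j' a) = j'.
Proof. by apply/ffunP => i; rewrite !ffunE /= valK. Qed.

Lemma last_ext j' a : lastj (extj j' a) = a.
Proof. by rewrite /lastj ffunE insubF //= ltnn. Qed.

Lemma ext_init_last j : extj (initj j) (lastj j) = j.
Proof.
apply/ffunP => i; rewrite !ffunE; case: insubP => [i' _ iv|].
  by rewrite ffunE; congr (j _); apply: val_inj.
rewrite -leqNgt => le; congr (j _); apply: val_inj => /=.
by apply/eqP; rewrite eqn_leq le -ltnS ltn_ord.
Qed.

Lemma sum_ext j' a : (\sum_(i < N.+2) (extj j' a i : nat) = \sum_(i < N.+1) (j' i : nat) + a)%N.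
Proof.
rewrite big_ord_recr /=; congr (_ + _)%N.
  by apply: eq_bigr => i _; rewrite ffunE /= valK.
by have := last_ext j' a; rewrite /lastj => ->.
Qed.

Lemma RI (V : nmodType) k (F : J2 -> V) :
  \sum_(j in Jm N.+1 k) F j =
  \sum_(a : 'I_K.+1 | (a <= k)%N) \sum_(j' in Jm N (k - a)) F (extj j' a).
Proof.
rewrite pair_big_dep /=.
rewrite (reindex (fun p : 'I_K.+1 * J1 => extj p.2 p.1)) /=; last first.
  exists (fun j => (lastj j, initj j)) => [p _|j _] /=.
    by rewrite init_ext last_ext; case: p.
  exact: ext_init_last.
apply: eq_bigl => -[a j'] /=; rewrite !inE sum_ext.
apply/eqP/andP => [h|[h1 /eqP h2]]; first by split; lia.
lia.
Qed.

End Comb.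


Section Clos.
Variables (R : realFieldType) (n : nat).
Local Notation P := {mpoly R[n]}.
Variable e : 'I_n.

Lemma CK0 : CK e.+1 (0 : P) = 0.
Proof. by rewrite CKE comp_mpoly0. Qed.

Lemma CK_lin c (p q : P) : CK e.+1 (c *: p + q) = c *: CK e.+1 p + CK e.+1 q.
Proof. by rewrite !CKE comp_mpolyD comp_mpolyZ. Qed.

Lemma CK_sumZ I (r : seq I) (Q : pred I) (c : I -> R) (F : I -> P) :
  CK e.+1 (\sum_(i <- r | Q i) c i *: F i) = \sum_(i <- r | Q i) c i *: CK e.+1 (F i).
Proof. by rewrite CKE linear_sum; apply: eq_bigr => i _; rewrite linearZ /= -CKE. Qed.

Lemma Vm_CK (p : P) : Vm e p -> Vm e.+1 (CK e.+1 p).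
Proof. by move=> hv i ei; rewrite chain_gt // hv ?CK0 // ltnW. Qed.

Lemma homog_CK (p : P) d : p \is d.-homog -> CK e.+1 p \is d.-homog.
Proof.
move=> hp; rewrite CKE; apply: dhomog_comp => // i; rewrite tnth_mktuple.
by case: ifP => _; [apply: rpredB|]; exact: dhomogXi.
Qed.

Lemma Vm_r0 (p : P) : Vm e.+1 p -> Vm e (r0 e p).
Proof.
move=> hv i ei; have [->|ne] := eqVneq i e; first exact: chain_r0e.
rewrite chain_r0 // hv; first by rewrite /r0 comp_mpoly0.
by rewrite ltn_neqAle ei andbT eq_sym; apply: contra ne => /eqP h; apply/eqP/val_inj.
Qed.

Lemma homog_r0 (p : P) d : p \is d.-homog -> r0 e p \is d.-homog.
Proof.
move=> hp; apply: dhomog_comp => // i; rewrite tnth_mktuple.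
by case: ifP => _; [exact: rpred0|exact: dhomogXi].
Qed.

Lemma Km_CK0 (f : P) : Vm e f -> Kminus e.+1 (CK e.+1 f) = 0.
Proof. by move=> hv; rewrite chain_Km hv // CK0. Qed.

Lemma CK_inj (f : P) : Vm e f -> CK e.+1 f = 0 -> f = 0.
Proof.
move=> hv h0; rewrite -(r0_id (hv e (leqnn _))) -r0_CK h0.
by rewrite /r0 comp_mpoly0.
Qed.

Lemma coef_V (q : P) (i : 'I_n) (mono : 'X_{1..n}) : q^`M(i) = 0 -> (0 < mono i)%N -> q@_mono = 0.
Proof.
move=> de0 pos; have := congr1 (mcoeff (mono - U_(i))%MM) de0.
rewrite mcoeff_mderiv mnm_subUK -?lt0n // mcoeff0 => /eqP.
by rewrite mulrn_eq0 /= => /eqP.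
Qed.

End Clos.

Lemma jfunE M K (j : {ffun 'I_M.+1 -> 'I_K.+1}) (l : nat) (H : (l.-1 < M.+1)%N) :
  @jfun M.+2 K j l = j (Ordinal H).
Proof. by rewrite /jfun (insubT (fun x => x < M.+1)%N H). Qed.

Section Psi.
Variables (R : realFieldType) (n : nat) (nu : 'I_n -> R).
Local Notation P := {mpoly R[n]}.

Lemma psi_inner_ext M (jf jf' : nat -> nat) :
  (forall l, (0 < l)%N -> (l <= M.+1)%N -> jf l = jf' l) ->
  psi_inner nu jf M = psi_inner nu jf' M.
Proof.
elim: M => [|M IH] h /=; first by rewrite h.
rewrite h // (IH _) // => l l0 lM; apply: h => //; exact: leqW.
Qed.

Definition psiI M K (j : {ffun 'I_M.+1 -> 'I_K.+1}) : P := psi_inner nu (@jfun M.+2 K j) M.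

Lemma psi_step M K (j : {ffun 'I_M.+2 -> 'I_K.+1}) :
  psiI j = iter (lastj j) (Kplus nu M.+2) (CK M.+2 (psiI (initj j))).
Proof.
rewrite /psiI /=.
rewrite (@jfunE M.+1 K j M.+2 (ltnSn M.+1)); congr (iter (nat_of_ord (j _)) _ (CK _ _)).
apply: psi_inner_ext => l l0 lM.
have H1 : (l.-1 < M.+2)%N by lia.
have H2 : (l.-1 < M.+1)%N by lia.
rewrite (jfunE j H1) (jfunE (initj j) H2) ffunE; congr (nat_of_ord (j _)).
exact: val_inj.
Qed.

End Psi.


Section Level.
Variables (R : realFieldType) (n : nat) (nu : 'I_n -> R).
Hypothesis nupos : forall i, 0 < nu i.
Local Notation P := {mpoly R[n]}.

Definition Basis M K k : Prop :=
  (forall j, j \in Jm K M k -> Vm M.+1 (psiI nu j) /\ psiI nu j \is k.-homog) /\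
  (forall c : {ffun 'I_M.+1 -> 'I_K.+1} -> R,
     \sum_(j in Jm K M k) c j *: psiI nu j = 0 -> forall j, j \in Jm K M k -> c j = 0) /\
  (forall q : P, Vm M.+1 q -> q \is k.-homog ->
     exists c : {ffun 'I_M.+1 -> 'I_K.+1} -> R, q = \sum_(j in Jm K M k) c j *: psiI nu j).

Section Base.
Hypothesis H : (1 < n)%N.
Let i0 : 'I_n := Ordinal (ltnW H).

Lemma psiI0 K (j : {ffun 'I_1 -> 'I_K.+1}) : psiI nu j = 'X_i0 ^+ (j ord0).
Proof.
rewrite /psiI /= (@jfunE 0 K j 1 (ltn0Sn 0)) /Xvar (insubT (fun x => x < n)%N (ltnW H)) /=.
by congr (_ ^+ nat_of_ord (j _)); apply: val_inj.
Qed.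

Lemma Xpow k : ('X_i0 ^+ k : P) = 'X_[U_(i0) *+ k].
Proof. by rewrite mpolyXn. Qed.

Variables (K k : nat).
Hypothesis kK : (k <= K)%N.
Let j0 : {ffun 'I_1 -> 'I_K.+1} := [ffun => inord k].

Lemma Jm0_eq j : (j \in Jm K 0 k) = (j == j0).
Proof.
rewrite inE big_ord1; apply/eqP/eqP => [hj|->]; last by rewrite ffunE inordK.
apply/ffunP => x; rewrite ffunE (ord1 x); apply: val_inj; by rewrite /= inordK.
Qed.

Lemma sum_Jm0 (F : {ffun 'I_1 -> 'I_K.+1} -> P) : \sum_(j in Jm K 0 k) F j = F j0.
Proof. by rewrite (big_pred1 j0) // => j; rewrite /= Jm0_eq. Qed.

Lemma psiI_j0 : psiI nu j0 = 'X_i0 ^+ k.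
Proof. by rewrite psiI0 ffunE inordK. Qed.

Lemma Xk_neq0 : ('X_i0 ^+ k : P) != 0.
Proof. by rewrite Xpow -msupp_eq0 msuppX. Qed.

Lemma basis0 : Basis 0 K k.
Proof.
split; [|split].
- move=> j; rewrite Jm0_eq => /eqP ->; rewrite psiI_j0; split.
    move=> i i1; rewrite Xpow mderivX mulmnE mnm1E.
    have -> : (i0 == i) = false.
      by apply/negbTE; apply: contraTneq i1 => <-.
    by rewrite mul0n scale0r.
  by have := dhomogMn k (dhomogXi R i0); rewrite mul1n.
- move=> c; rewrite sum_Jm0 psiI_j0 => /eqP; rewrite mscalerI (negbTE Xk_neq0) orbF.
  by move=> /eqP c0 j; rewrite Jm0_eq => /eqP ->.
move=> q Vq /dhomogP Hq; exists (fun _ => q@_(U_(i0) *+ k)%MM).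
rewrite sum_Jm0 psiI_j0 Xpow; apply/mpolyP => mono.
rewrite mcoeffZ mcoeffX; case: eqP => [<-|ne]; first by rewrite mulr1.
rewrite mulr0; have [//|nz] := eqVneq (q@_mono) 0; exfalso; apply: ne.
have vi : forall i : 'I_n, i != i0 -> mono i = 0%N.
  move=> i ne0; apply/eqP; rewrite -leqn0 leqNgt; apply/negP => pos.
  have i1 : (1 <= i)%N by rewrite lt0n; apply: contra ne0 => /eqP h; apply/eqP/val_inj.
  by move: nz; rewrite (coef_V (Vq i i1) pos) eqxx.
have md : mdeg mono = k by apply: Hq; rewrite mcoeff_msupp.
apply/mnmP => i; rewrite mulmnE mnm1E.
have [<-|ne0] := eqVneq i0 i; last by rewrite mul0n vi // eq_sym.
rewrite mul1n -md mdegE (bigD1 i0) //= big1 ?addn0 // => l /vi.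
Qed.

End Base.

Section Step.
Variable M : nat.
Hypothesis HM : (M.+2 < n)%N.
Let e : 'I_n := Ordinal (ltnW HM).
Variable K : nat.
Hypothesis IH : forall k, (k <= K)%N -> Basis M K k.
Local Notation Kp := (Kplus nu M.+2).

Lemma split_J k (j : {ffun 'I_M.+2 -> 'I_K.+1}) :
  j \in Jm K M.+1 k -> (lastj j <= k)%N /\ initj j \in Jm K M (k - lastj j).
Proof.
rewrite !inE -{1}(ext_init_last j) sum_ext => /eqP h; split; first by lia.
by apply/eqP; lia.
Qed.

Lemma ext_term (j' : {ffun 'I_M.+1 -> 'I_K.+1}) a :
  psiI nu (extj j' a) = iter a Kp (CK M.+2 (psiI nu j')).
Proof. by rewrite psi_step init_ext last_ext. Qed.

Lemma good_inner i (c : {ffun 'I_M.+1 -> 'I_K.+1} -> R) : (i <= K)%N ->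
  Vm M.+1 (\sum_(j' in Jm K M i) c j' *: psiI nu j') /\
  (\sum_(j' in Jm K M i) c j' *: psiI nu j') \is i.-homog.
Proof.
move=> iK; split.
  by apply: Vm_sum => j' jJ; apply: VmZ; have [] := (IH iK).1 j' jJ.
by apply: rpred_sum => j' jJ; apply: rpredZ; have [] := (IH iK).1 j' jJ.
Qed.

Lemma basisS k : (k <= K)%N -> Basis M.+1 K k.
Proof.
move=> kK; split; [|split].
- move=> j jJ; have [la ij] := split_J jJ.
  have [V1 H1] := (IH (leq_trans (leq_subr (lastj j) k) kK)).1 _ ij.
  rewrite psi_step; split.
    by apply: Vm_iter; apply: (@Vm_CK R n e).
  by have := homog_iter nu M.+2 (lastj j) (homog_CK e H1); rewrite subnK.
- move=> c hsum.
  pose hh i := CK M.+2 (\sum_(j' in Jm K M i) c (extj j' (inord (k - i))) *: psiI nu j').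
  have S : \sum_(a < k.+1) iter a Kp (hh (k - a)%N) = 0.
    rewrite -[RHS]hsum RI (big_ord_widen K.+1 (fun a => iter a Kp (hh (k - a)%N)) (kK : (k < K.+1)%N)).
    apply: eq_big => [a|a ak]; first by rewrite ltnS.
    rewrite /hh (CK_sumZ e) (iter_sum nu) (subKn (ak : (a <= k)%N)); apply: eq_bigr => j' _.
    by rewrite (iterZ nu) (ext_term j' a) inord_val.
  have gd : forall i, (i <= k)%N -> good e i (hh i).
    move=> i ik; have [V1 H1] := good_inner (fun j' => c (extj j' (inord (k - i)))) (leq_trans ik kK).
    split; first exact: (@Km_CK0 R n e _ V1).
    by split; [exact: (@Vm_CK R n e _ V1) | exact: (homog_CK e H1)].
  have hz := KL_uniq nupos gd S.
  move=> j jJ; have [la ij] := split_J jJ.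
  have ik : (k - lastj j <= k)%N := leq_subr _ _.
  have [V1 _] := good_inner (fun j' => c (extj j' (inord (k - (k - lastj j))))) (leq_trans ik kK).
  have := @CK_inj R n e _ V1 (hz _ ik) => /(IH (leq_trans ik kK)).2.1 /(_ _ ij).
  by rewrite subKn // inord_val ext_init_last.
move=> q Vq Hq.
have [h [hg Eq]] := KL_exist nupos (e := e) Vq Hq.
have Cex : forall i, exists c : {ffun 'I_M.+1 -> 'I_K.+1} -> R, (i <= k)%N ->
    r0 e (h i) = \sum_(j' in Jm K M i) c j' *: psiI nu j'.
  move=> i; case: (leqP i k) => ik; last by exists (fun _ => 0).
  have [K1 [V1 H1]] := hg i ik.
  have [c hc] := (IH (leq_trans ik kK)).2.2 (r0 e (h i)) (Vm_r0 V1) (homog_r0 e H1).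
  by exists c.
pose C i := proj1_sig (constructive_indefinite_description _ (Cex i)).
have hC : forall i, (i <= k)%N -> r0 e (h i) = \sum_(j' in Jm K M i) C i j' *: psiI nu j'.
  by move=> i; exact: (proj2_sig (constructive_indefinite_description _ (Cex i))).
exists (fun j => C (k - lastj j)%N (initj j)).
rewrite RI Eq (big_ord_widen K.+1 (fun a => iter a Kp (h (k - a)%N)) (kK : (k < K.+1)%N)).
apply: eq_big => [a|a ak]; first by rewrite ltnS.
have [K1 _] := hg (k - a)%N (leq_subr _ _).
rewrite (ker_CK K1) (hC _ (leq_subr _ _)) (CK_sumZ e) (iter_sum nu).
by apply: eq_bigr => j' _; rewrite (iterZ nu) (ext_term j' a) (init_ext j' a) (last_ext j' a).
Qed.

End Step.

Lemma level M : (M.+1 < n)%N -> forall K k, (k <= K)%N -> Basis M K k.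
Proof.
elim: M => [|M IHM] HM K k kK; first exact: basis0.
apply: basisS => // k' k'K; apply: IHM => //; exact: ltnW.
Qed.

End Level.

End Aux.
Import Aux.

Theorem theorem3p3 (R : realFieldType) (n k : nat) (nu : 'I_n -> R) :
  (2 <= n)%N -> (forall i, 0 < nu i) ->
  (* every psi_j lies in H_k(R^n) *)
  (forall j, j \in Jset n k -> psi nu (jfun j) \in @Hk R n k) /\
  (* the family (psi_j)_{j in J} is linearly independent *)
  (forall c : {ffun 'I_n.-1 -> 'I_k.+1} -> R,
      \sum_(j in Jset n k) c j *: psi nu (jfun j) = 0 ->
      forall j, j \in Jset n k -> c j = 0) /\
  (* and spans H_k(R^n) *)
  (forall p : {mpoly R[n]}, p \in @Hk R n k ->
      exists c : {ffun 'I_n.-1 -> 'I_k.+1} -> R,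
        p = \sum_(j in Jset n k) c j *: psi nu (jfun j)).
Proof.
move=> n2 nupos.
have [n' En] : exists n', n = n'.+2 by exists (n - 2)%N; lia.
subst n.
pose eL : 'I_n'.+2 := Ordinal (ltnSn n'.+1).
have Epsi : forall jf, psi nu jf = CK eL.+1 (psi_inner nu jf n').
  by move=> jf; rewrite /psi subn2.
have B := level nupos (ltnSn n'.+1) (leqnn k).
case: B => [Bm [Bi Bs]].
split; [|split].
- move=> j jJ; have [V1 H1] := Bm j jJ.
  rewrite unfold_in /Hk Epsi.
  change ((CK eL.+1 (psiI nu j) \is k.-homog) && (Kminus eL.+1 (CK eL.+1 (psiI nu j)) == 0)).
  by rewrite (homog_CK eL H1) (@Km_CK0 R _ eL _ V1) eqxx.
- move=> c hc j jJ; apply: (Bi c _ j jJ).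
  have V : Vm eL (\sum_(j in Jm k n' k) c j *: psiI nu j).
    by apply: Vm_sum => j' jJ'; apply: VmZ; have [] := Bm j' jJ'.
  apply: (@CK_inj R _ eL _ V); rewrite (CK_sumZ eL) -[RHS]hc.
  by apply: eq_bigr => j' _; rewrite Epsi.
move=> p; rewrite unfold_in /Hk => /andP [Hp /eqP Kp].
change (Kminus eL.+1 p = 0) in Kp.
have Vp : Vm eL.+1 p by move=> i; rewrite leqNgt ltn_ord.
have [c hc] := Bs (r0 eL p) (Vm_r0 Vp) (homog_r0 eL Hp).
exists c; rewrite {1}(ker_CK Kp) hc (CK_sumZ eL).
by apply: eq_bigr => j' _; rewrite Epsi.
Qed.
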